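(* Let $\mathcal{G}$ be the set of $\mathbf{r}=(r_{12},r_{13},r_{14},r_{23},r_{24},r_{34})\in[0,\infty)^6$ with $H(\mathbf{r})\ge 0$ and $r_{ij}+r_{jk}>r_{ik}$ for all pairwise distinct $i,j,k$ (with $r_{ji}=r_{ij}$), and let $\mathcal{P}=\{\mathbf{r}\in\mathcal{G}:P(\mathbf{r})=0\}$, where $P(\mathbf{r})=r_{12}r_{34}+r_{14}r_{23}-r_{13}r_{24}$. If $\mathbf{r}\in\mathcal{P}$ then $H(\mathbf{r})=0$. Moreover $\mathcal{D}=\mathcal{M}^+\cap\mathcal{G}$, where $\mathcal{M}^+=\{\mathbf{r}\in[0,\infty)^6: I(\mathbf{r})=1,\ P(\mathbf{r})=0\}$ and $\mathcal{D}=\{\mathbf{r}\in\mathcal{G}: I(\mathbf{r})=1,\ P(\mathbf{r})=0,\ H(\mathbf{r})=0\}$.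
   Context: $H(\mathbf{r})$ is the Cayley–Menger determinant $H(\mathbf{r})=\det\begin{pmatrix}0&1&1&1&1\\1&0&r_{12}^2&r_{13}^2&r_{14}^2\\1&r_{12}^2&0&r_{23}^2&r_{24}^2\\1&r_{13}^2&r_{23}^2&0&r_{34}^2\\1&r_{14}^2&r_{24}^2&r_{34}^2&0\end{pmatrix}$ (equal to $288V^2$, $V$ the volume of the tetrahedron with these edge lengths). With masses $m_1,\dots,m_4>0$ and $M=\sum m_i$, $I(\mathbf{r})=\frac{1}{2M}\sum_{i<j}m_im_jr_{ij}^2$. *)

(* Defs.v *)
From HB Require Import structures.
From mathcomp Require Import all_boot all_order all_algebra.
From mathcomp Require Import reals.
Set Implicit Arguments. Unset Strict Implicit. Unset Printing Implicit Defensive.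
Import Order.TTheory GRing.Theory Num.Theory.
Local Open Scope ring_scope.

Section Tetra.
Variable R : realType.

(* A configuration r = (r12,r13,r14,r23,r24,r34) is a row vector of size 6:
   r 0 = r12, r 1 = r13, r 2 = r14, r 3 = r23, r 4 = r24, r 5 = r34.
   Bodies 1..4 are indexed by 'I_4 as 0..3. *)
Definition eidx (i j : nat) : nat :=
  match i, j with
  | 0, 1 | 1, 0 => 0
  | 0, 2 | 2, 0 => 1
  | 0, 3 | 3, 0 => 2
  | 1, 2 | 2, 1 => 3
  | 1, 3 | 3, 1 => 4
  | 2, 3 | 3, 2 => 5
  | _, _ => 0
  end.

Definition rr (r : 'rV[R]_6) (i j : 'I_4) : R :=
  if i == j then 0 else r ord0 (inord (eidx i j)).

Definition CM (r : 'rV[R]_6) : 'M[R]_5 :=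
  \matrix_(a < 5, b < 5)
    if a == b then 0
    else if (a == 0%N :> nat) || (b == 0%N :> nat) then 1
    else (rr r (inord a.-1) (inord b.-1)) ^+ 2.

Definition H (r : 'rV[R]_6) : R := \det (CM r).

Definition Mtot (m : 'I_4 -> R) : R := \sum_(i < 4) m i.

Definition I (m : 'I_4 -> R) (r : 'rV[R]_6) : R :=
  (2 * Mtot m)^-1 * \sum_(i < 4) \sum_(j < 4 | (i < j)%N) m i * m j * (rr r i j) ^+ 2.

Definition P (r : 'rV[R]_6) : R :=
  r ord0 (inord 0) * r ord0 (inord 5) + r ord0 (inord 2) * r ord0 (inord 3)
  - r ord0 (inord 1) * r ord0 (inord 4).

Definition nonneg6 (r : 'rV[R]_6) : Prop := forall k : 'I_6, 0 <= r ord0 k.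

Definition inG (r : 'rV[R]_6) : Prop :=
  nonneg6 r /\ 0 <= H r /\
  (forall i j k : 'I_4, i != j -> j != k -> i != k -> rr r i k < rr r i j + rr r j k).

Definition inP (r : 'rV[R]_6) : Prop := inG r /\ P r = 0.

Definition inMplus (m : 'I_4 -> R) (r : 'rV[R]_6) : Prop :=
  nonneg6 r /\ I m r = 1 /\ P r = 0.

Definition inD (m : 'I_4 -> R) (r : 'rV[R]_6) : Prop :=
  inG r /\ I m r = 1 /\ P r = 0 /\ H r = 0.

End Tetra.

(* Main.v *)
Require Import Defs.
From HB Require Import structures.
From mathcomp Require Import all_boot all_order all_algebra.
From mathcomp Require Import reals.
From mathcomp Require Import ring lra.
Import Order.TTheory GRing.Theory Num.Theory.
Local Open Scope ring_scope.

Section S.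
Variable R : realType.

Definition Mf n (f : nat -> nat -> R) : 'M[R]_n := \matrix_(i < n, j < n) f i j.

Definition bmp (j k : nat) : nat := if Nat.ltb k j then k else k.+1.

Lemma ltbE k j : Nat.ltb k j = (k < j)%N.
Proof.
case: (ltnP k j) => h.
- apply/PeanoNat.Nat.ltb_lt. by apply/ssrnat.ltP.
- apply/PeanoNat.Nat.ltb_ge. by apply/ssrnat.leP.
Qed.

Lemma bmpE j k : bump j k = bmp j k.
Proof.
by rewrite /bump /bmp ltbE; case: (ltnP k j).
Qed.

Lemma det_rec n (f : nat -> nat -> R) :
  \det (Mf n.+1 f) =
  \sum_(0 <= j < n.+1) f 0%N j * (-1) ^+ j * \det (Mf n (fun i k => f i.+1 (bmp j k))).
Proof.
rewrite big_mkord (expand_det_row _ ord0); apply: eq_bigr => j _.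
rewrite mxE /cofactor add0n -mulrA; congr (_ * (_ * _)).
congr (\det _); apply/matrixP => i k; by rewrite !mxE /= !bmpE /bmp /=.
Qed.

Lemma det_Mf0 (f : nat -> nat -> R) : \det (Mf 0 f) = 1.
Proof. exact: det_mx00. Qed.

Lemma sum1 (F : nat -> R) : \sum_(0 <= j < 1) F j = F 0%N.
Proof. by rewrite big_nat1. Qed.
Lemma sum2 (F : nat -> R) : \sum_(0 <= j < 2) F j = F 0%N + F 1%N.
Proof. by rewrite !big_nat_recl // big_geq // addr0. Qed.
Lemma sum3 (F : nat -> R) : \sum_(0 <= j < 3) F j = F 0%N + F 1%N + F 2%N.
Proof. by rewrite !big_nat_recl // big_geq // addr0 !addrA. Qed.
Lemma sum4 (F : nat -> R) : \sum_(0 <= j < 4) F j = F 0%N + F 1%N + F 2%N + F 3%N.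
Proof. by rewrite !big_nat_recl // big_geq // addr0 !addrA. Qed.
Lemma sum5 (F : nat -> R) : \sum_(0 <= j < 5) F j = F 0%N + F 1%N + F 2%N + F 3%N + F 4%N.
Proof. by rewrite !big_nat_recl // big_geq // addr0 !addrA. Qed.

Lemma det5 (f : nat -> nat -> R) : \det (Mf 5 f) =
  f 0 0*f 1 1*f 2 2*f 3 3*f 4 4
  - f 0 0*f 1 1*f 2 2*f 3 4*f 4 3
  - f 0 0*f 1 1*f 2 3*f 3 2*f 4 4
  + f 0 0*f 1 1*f 2 3*f 3 4*f 4 2
  + f 0 0*f 1 1*f 2 4*f 3 2*f 4 3
  - f 0 0*f 1 1*f 2 4*f 3 3*f 4 2
  - f 0 0*f 1 2*f 2 1*f 3 3*f 4 4
  + f 0 0*f 1 2*f 2 1*f 3 4*f 4 3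
  + f 0 0*f 1 2*f 2 3*f 3 1*f 4 4
  - f 0 0*f 1 2*f 2 3*f 3 4*f 4 1
  - f 0 0*f 1 2*f 2 4*f 3 1*f 4 3
  + f 0 0*f 1 2*f 2 4*f 3 3*f 4 1
  + f 0 0*f 1 3*f 2 1*f 3 2*f 4 4
  - f 0 0*f 1 3*f 2 1*f 3 4*f 4 2
  - f 0 0*f 1 3*f 2 2*f 3 1*f 4 4
  + f 0 0*f 1 3*f 2 2*f 3 4*f 4 1
  + f 0 0*f 1 3*f 2 4*f 3 1*f 4 2
  - f 0 0*f 1 3*f 2 4*f 3 2*f 4 1
  - f 0 0*f 1 4*f 2 1*f 3 2*f 4 3
  + f 0 0*f 1 4*f 2 1*f 3 3*f 4 2
  + f 0 0*f 1 4*f 2 2*f 3 1*f 4 3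
  - f 0 0*f 1 4*f 2 2*f 3 3*f 4 1
  - f 0 0*f 1 4*f 2 3*f 3 1*f 4 2
  + f 0 0*f 1 4*f 2 3*f 3 2*f 4 1
  - f 0 1*f 1 0*f 2 2*f 3 3*f 4 4
  + f 0 1*f 1 0*f 2 2*f 3 4*f 4 3
  + f 0 1*f 1 0*f 2 3*f 3 2*f 4 4
  - f 0 1*f 1 0*f 2 3*f 3 4*f 4 2
  - f 0 1*f 1 0*f 2 4*f 3 2*f 4 3
  + f 0 1*f 1 0*f 2 4*f 3 3*f 4 2
  + f 0 1*f 1 2*f 2 0*f 3 3*f 4 4
  - f 0 1*f 1 2*f 2 0*f 3 4*f 4 3
  - f 0 1*f 1 2*f 2 3*f 3 0*f 4 4
  + f 0 1*f 1 2*f 2 3*f 3 4*f 4 0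
  + f 0 1*f 1 2*f 2 4*f 3 0*f 4 3
  - f 0 1*f 1 2*f 2 4*f 3 3*f 4 0
  - f 0 1*f 1 3*f 2 0*f 3 2*f 4 4
  + f 0 1*f 1 3*f 2 0*f 3 4*f 4 2
  + f 0 1*f 1 3*f 2 2*f 3 0*f 4 4
  - f 0 1*f 1 3*f 2 2*f 3 4*f 4 0
  - f 0 1*f 1 3*f 2 4*f 3 0*f 4 2
  + f 0 1*f 1 3*f 2 4*f 3 2*f 4 0
  + f 0 1*f 1 4*f 2 0*f 3 2*f 4 3
  - f 0 1*f 1 4*f 2 0*f 3 3*f 4 2
  - f 0 1*f 1 4*f 2 2*f 3 0*f 4 3
  + f 0 1*f 1 4*f 2 2*f 3 3*f 4 0
  + f 0 1*f 1 4*f 2 3*f 3 0*f 4 2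
  - f 0 1*f 1 4*f 2 3*f 3 2*f 4 0
  + f 0 2*f 1 0*f 2 1*f 3 3*f 4 4
  - f 0 2*f 1 0*f 2 1*f 3 4*f 4 3
  - f 0 2*f 1 0*f 2 3*f 3 1*f 4 4
  + f 0 2*f 1 0*f 2 3*f 3 4*f 4 1
  + f 0 2*f 1 0*f 2 4*f 3 1*f 4 3
  - f 0 2*f 1 0*f 2 4*f 3 3*f 4 1
  - f 0 2*f 1 1*f 2 0*f 3 3*f 4 4
  + f 0 2*f 1 1*f 2 0*f 3 4*f 4 3
  + f 0 2*f 1 1*f 2 3*f 3 0*f 4 4
  - f 0 2*f 1 1*f 2 3*f 3 4*f 4 0
  - f 0 2*f 1 1*f 2 4*f 3 0*f 4 3
  + f 0 2*f 1 1*f 2 4*f 3 3*f 4 0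
  + f 0 2*f 1 3*f 2 0*f 3 1*f 4 4
  - f 0 2*f 1 3*f 2 0*f 3 4*f 4 1
  - f 0 2*f 1 3*f 2 1*f 3 0*f 4 4
  + f 0 2*f 1 3*f 2 1*f 3 4*f 4 0
  + f 0 2*f 1 3*f 2 4*f 3 0*f 4 1
  - f 0 2*f 1 3*f 2 4*f 3 1*f 4 0
  - f 0 2*f 1 4*f 2 0*f 3 1*f 4 3
  + f 0 2*f 1 4*f 2 0*f 3 3*f 4 1
  + f 0 2*f 1 4*f 2 1*f 3 0*f 4 3
  - f 0 2*f 1 4*f 2 1*f 3 3*f 4 0
  - f 0 2*f 1 4*f 2 3*f 3 0*f 4 1
  + f 0 2*f 1 4*f 2 3*f 3 1*f 4 0
  - f 0 3*f 1 0*f 2 1*f 3 2*f 4 4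
  + f 0 3*f 1 0*f 2 1*f 3 4*f 4 2
  + f 0 3*f 1 0*f 2 2*f 3 1*f 4 4
  - f 0 3*f 1 0*f 2 2*f 3 4*f 4 1
  - f 0 3*f 1 0*f 2 4*f 3 1*f 4 2
  + f 0 3*f 1 0*f 2 4*f 3 2*f 4 1
  + f 0 3*f 1 1*f 2 0*f 3 2*f 4 4
  - f 0 3*f 1 1*f 2 0*f 3 4*f 4 2
  - f 0 3*f 1 1*f 2 2*f 3 0*f 4 4
  + f 0 3*f 1 1*f 2 2*f 3 4*f 4 0
  + f 0 3*f 1 1*f 2 4*f 3 0*f 4 2
  - f 0 3*f 1 1*f 2 4*f 3 2*f 4 0
  - f 0 3*f 1 2*f 2 0*f 3 1*f 4 4
  + f 0 3*f 1 2*f 2 0*f 3 4*f 4 1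
  + f 0 3*f 1 2*f 2 1*f 3 0*f 4 4
  - f 0 3*f 1 2*f 2 1*f 3 4*f 4 0
  - f 0 3*f 1 2*f 2 4*f 3 0*f 4 1
  + f 0 3*f 1 2*f 2 4*f 3 1*f 4 0
  + f 0 3*f 1 4*f 2 0*f 3 1*f 4 2
  - f 0 3*f 1 4*f 2 0*f 3 2*f 4 1
  - f 0 3*f 1 4*f 2 1*f 3 0*f 4 2
  + f 0 3*f 1 4*f 2 1*f 3 2*f 4 0
  + f 0 3*f 1 4*f 2 2*f 3 0*f 4 1
  - f 0 3*f 1 4*f 2 2*f 3 1*f 4 0
  + f 0 4*f 1 0*f 2 1*f 3 2*f 4 3
  - f 0 4*f 1 0*f 2 1*f 3 3*f 4 2
  - f 0 4*f 1 0*f 2 2*f 3 1*f 4 3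
  + f 0 4*f 1 0*f 2 2*f 3 3*f 4 1
  + f 0 4*f 1 0*f 2 3*f 3 1*f 4 2
  - f 0 4*f 1 0*f 2 3*f 3 2*f 4 1
  - f 0 4*f 1 1*f 2 0*f 3 2*f 4 3
  + f 0 4*f 1 1*f 2 0*f 3 3*f 4 2
  + f 0 4*f 1 1*f 2 2*f 3 0*f 4 3
  - f 0 4*f 1 1*f 2 2*f 3 3*f 4 0
  - f 0 4*f 1 1*f 2 3*f 3 0*f 4 2
  + f 0 4*f 1 1*f 2 3*f 3 2*f 4 0
  + f 0 4*f 1 2*f 2 0*f 3 1*f 4 3
  - f 0 4*f 1 2*f 2 0*f 3 3*f 4 1
  - f 0 4*f 1 2*f 2 1*f 3 0*f 4 3
  + f 0 4*f 1 2*f 2 1*f 3 3*f 4 0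
  + f 0 4*f 1 2*f 2 3*f 3 0*f 4 1
  - f 0 4*f 1 2*f 2 3*f 3 1*f 4 0
  - f 0 4*f 1 3*f 2 0*f 3 1*f 4 2
  + f 0 4*f 1 3*f 2 0*f 3 2*f 4 1
  + f 0 4*f 1 3*f 2 1*f 3 0*f 4 2
  - f 0 4*f 1 3*f 2 1*f 3 2*f 4 0
  - f 0 4*f 1 3*f 2 2*f 3 0*f 4 1
  + f 0 4*f 1 3*f 2 2*f 3 1*f 4 0.
Proof.
rewrite det_rec sum5 /bmp /=.
rewrite !det_rec !sum4 /bmp /=.
rewrite !det_rec !sum3 /bmp /=.
rewrite !det_rec !sum2 /bmp /=.
rewrite !det_rec !sum1 /bmp /=.
rewrite !det_Mf0.
ring.
Qed.

Definition fCM (r : 'rV[R]_6) (a b : nat) : R :=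
  if a == b then 0 else if (a == 0%N) || (b == 0%N) then 1
  else (rr r (inord a.-1) (inord b.-1)) ^+ 2.

Lemma CME (r : 'rV[R]_6) : CM r = Mf 5 (fCM r).
Proof. by apply/matrixP => i j; rewrite !mxE. Qed.

Lemma rrE (r : 'rV[R]_6) i j : (i < 4)%N -> (j < 4)%N ->
  rr r (inord i) (inord j) = if i == j then 0 else r ord0 (inord (eidx i j)).
Proof.
move=> hi hj; rewrite /rr.
have -> : (inord i == inord j :> 'I_4) = (i == j) by rewrite -val_eqE /= !inordK.
by rewrite !inordK.
Qed.

Lemma fv00 (r : 'rV[R]_6) : fCM r 0 0 = 0.
Proof. by rewrite /fCM /= ?rrE. Qed.

Lemma fv01 (r : 'rV[R]_6) : fCM r 0 1 = 1.
Proof. by rewrite /fCM /= ?rrE. Qed.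

Lemma fv02 (r : 'rV[R]_6) : fCM r 0 2 = 1.
Proof. by rewrite /fCM /= ?rrE. Qed.

Lemma fv03 (r : 'rV[R]_6) : fCM r 0 3 = 1.
Proof. by rewrite /fCM /= ?rrE. Qed.

Lemma fv04 (r : 'rV[R]_6) : fCM r 0 4 = 1.
Proof. by rewrite /fCM /= ?rrE. Qed.

Lemma fv10 (r : 'rV[R]_6) : fCM r 1 0 = 1.
Proof. by rewrite /fCM /= ?rrE. Qed.

Lemma fv11 (r : 'rV[R]_6) : fCM r 1 1 = 0.
Proof. by rewrite /fCM /= ?rrE. Qed.

Lemma fv12 (r : 'rV[R]_6) : fCM r 1 2 = (r ord0 (inord 0)) ^+ 2.
Proof. by rewrite /fCM /= ?rrE. Qed.

Lemma fv13 (r : 'rV[R]_6) : fCM r 1 3 = (r ord0 (inord 1)) ^+ 2.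
Proof. by rewrite /fCM /= ?rrE. Qed.

Lemma fv14 (r : 'rV[R]_6) : fCM r 1 4 = (r ord0 (inord 2)) ^+ 2.
Proof. by rewrite /fCM /= ?rrE. Qed.

Lemma fv20 (r : 'rV[R]_6) : fCM r 2 0 = 1.
Proof. by rewrite /fCM /= ?rrE. Qed.

Lemma fv21 (r : 'rV[R]_6) : fCM r 2 1 = (r ord0 (inord 0)) ^+ 2.
Proof. by rewrite /fCM /= ?rrE. Qed.

Lemma fv22 (r : 'rV[R]_6) : fCM r 2 2 = 0.
Proof. by rewrite /fCM /= ?rrE. Qed.

Lemma fv23 (r : 'rV[R]_6) : fCM r 2 3 = (r ord0 (inord 3)) ^+ 2.
Proof. by rewrite /fCM /= ?rrE. Qed.

Lemma fv24 (r : 'rV[R]_6) : fCM r 2 4 = (r ord0 (inord 4)) ^+ 2.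
Proof. by rewrite /fCM /= ?rrE. Qed.

Lemma fv30 (r : 'rV[R]_6) : fCM r 3 0 = 1.
Proof. by rewrite /fCM /= ?rrE. Qed.

Lemma fv31 (r : 'rV[R]_6) : fCM r 3 1 = (r ord0 (inord 1)) ^+ 2.
Proof. by rewrite /fCM /= ?rrE. Qed.

Lemma fv32 (r : 'rV[R]_6) : fCM r 3 2 = (r ord0 (inord 3)) ^+ 2.
Proof. by rewrite /fCM /= ?rrE. Qed.

Lemma fv33 (r : 'rV[R]_6) : fCM r 3 3 = 0.
Proof. by rewrite /fCM /= ?rrE. Qed.

Lemma fv34 (r : 'rV[R]_6) : fCM r 3 4 = (r ord0 (inord 5)) ^+ 2.
Proof. by rewrite /fCM /= ?rrE. Qed.

Lemma fv40 (r : 'rV[R]_6) : fCM r 4 0 = 1.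
Proof. by rewrite /fCM /= ?rrE. Qed.

Lemma fv41 (r : 'rV[R]_6) : fCM r 4 1 = (r ord0 (inord 2)) ^+ 2.
Proof. by rewrite /fCM /= ?rrE. Qed.

Lemma fv42 (r : 'rV[R]_6) : fCM r 4 2 = (r ord0 (inord 4)) ^+ 2.
Proof. by rewrite /fCM /= ?rrE. Qed.

Lemma fv43 (r : 'rV[R]_6) : fCM r 4 3 = (r ord0 (inord 5)) ^+ 2.
Proof. by rewrite /fCM /= ?rrE. Qed.

Lemma fv44 (r : 'rV[R]_6) : fCM r 4 4 = 0.
Proof. by rewrite /fCM /= ?rrE. Qed.


Lemma HQ (r : 'rV[R]_6) :
  let a := r ord0 (inord 0) in let c := r ord0 (inord 2) in
  let d := r ord0 (inord 3) in let e := r ord0 (inord 4) in let f := r ord0 (inord 5) in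
  0 < e -> P r = 0 ->
  e ^+ 2 * H r = - 2 * (d*f*(a^+2+c^+2-e^+2) + a*c*(d^+2+f^+2-e^+2)) ^+ 2.
Proof.
move=> a c d e f.
rewrite /P /H CME det5 !fv00 !fv01 !fv02 !fv03 !fv04 !fv10 !fv11 !fv12 !fv13 !fv14 !fv20 !fv21 !fv22 !fv23 !fv24 !fv30 !fv31 !fv32 !fv33 !fv34 !fv40 !fv41 !fv42 !fv43 !fv44.
rewrite -/a -/c -/d -/e -/f.
set b := r ord0 (inord 1).
move=> he hP.
have hbe : b * e = a * f + c * d by lra.
have hb : b = (a * f + c * d) / e by rewrite -hbe mulfK // lt0r_neq0.
rewrite hb. field. by rewrite lt0r_neq0.
Qed.

Lemma HP (r : 'rV[R]_6) :
  0 < r ord0 (inord 4) -> P r = 0 -> 0 <= H r -> H r = 0.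
Proof.
move=> he hP hX.
have eX := @HQ r he hP.
have e2 : 0 < r ord0 (inord 4) ^+ 2 by rewrite exprn_gt0.
have : r ord0 (inord 4) ^+ 2 * H r <= 0 by rewrite eX mulNr oppr_le0 mulr_ge0 ?sqr_ge0.
rewrite pmulr_rle0 // => hX'; lra.
Qed.

Lemma e_pos (r : 'rV[R]_6) : inG r -> 0 < r ord0 (inord 4).
Proof.
case=> hnn [_ htri].
have n01 : (inord 0 : 'I_4) != inord 1 by rewrite -val_eqE /= !inordK.
have n13 : (inord 1 : 'I_4) != inord 3 by rewrite -val_eqE /= !inordK.
have n03 : (inord 0 : 'I_4) != inord 3 by rewrite -val_eqE /= !inordK.
have t1 := htri (inord 0) (inord 1) (inord 3) n01 n13 n03.
have t2 := htri (inord 0) (inord 3) (inord 1) n03 (negbT (introF eqP (fun h => (negP n13) (introT eqP (esym h))))) n01.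
rewrite !rrE //= in t1 t2.
have := hnn (inord 4); lra.
Qed.
End S.

Theorem lemma1 (R : realType) (m : 'I_4 -> R) (hm : forall i, 0 < m i) :
  (forall r : 'rV[R]_6, inP r -> H r = 0) /\
  (forall r : 'rV[R]_6, inD m r <-> (inMplus m r /\ inG r)).
Proof.
split.
- move=> r [hG hP]; apply: HP => //; [exact: e_pos | by case: hG => _ []].
- move=> r; split.
  + case=> hG [hI [hP hH0]]; split => //; split => //; by case: hG.
  + case=> [[hnn [hI hP]] hG]; split => //; split => //; split => //.
    apply: HP => //; [exact: e_pos | by case: hG => _ []].
Qed.
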